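(* Any GET operation by client $c$ on a key $k$ of partition $p$ in which the client sends $hwv = hwm[:,p]$ (its current row for partition $p$ of the highest-write matrix) satisfies per-key read-your-write consistency: if the operation is issued at time $t$ and served by server $s$, which reads the value of $k$ at time $t'$, then every $w\in ClientWrites(c,k,t)$ is included in $CommittedWrites(s,k,t')$.
   Context: System model. Data is replicated in $D$ datacenters and split into $P$ partitions. In each datacenter $d$, each partition is replicated by a Raft group with a leader $L_d$; Raft guarantees that all members of a group commit the same totally ordered sequence of log entries, each with a log index, in increasing index order. Every version $v$ of a key carries a value, an originating datacenter $v.dc\_id$, the log index $idx(v)$ it received in the Raft log of its originating datacenter, and a hybrid logical clock (HLC) timestamp $v.t=\langle l,c\rangle$; HLC timestamps are compared lexicographically. Writes committed in the group of datacenter $d$ that originated at $d$ are forwarded, in commit order, over FIFO channels to the leaders of the same partition in every other datacenter, which append them (carrying their original index $idx(v)$) to their own Raft logs. Each server $s$ keeps a vector $sv$ of length $D$, initially zero; when $s$ commits a version $v$ it sets $sv[v.dc\_id]:=idx(v)$ and adds $v$ to the version chain of its key. Client protocol. Each client $c$ keeps $D\times P$ matrices $hrm$ (highest read) and $hwm$ (highest write), initially zero, and HLC timestamps $dt_r,dt_w$, initially zero. GET of key $k$ in partition $p$: the client sends vectors $hrv,hwv$ of length $D$ (each either the zero vector or $hrm[:,p]$, resp. $hwm[:,p]$); the server blocks while there is $i$ with $sv[i]<hrv[i]$ or $sv[i]<hwv[i]$; it then returns the version $v$ of $k$ in its version chain with the largest timestamp, together with $v.dc\_id$, $sv[v.dc\_id]$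 and $v.t$; the client sets $hrm[v.dc\_id,p]:=\max(hrm[v.dc\_id,p],sv[v.dc\_id])$ and $dt_r:=\max(dt_r,v.t)$. PUT of key $k$ in partition $p$ at leader $L_d$: the client sends a dependency timestamp $dt$ (one of $0$, $dt_r$, $dt_w$, $\max(dt_r,dt_w)$); the leader updates its HLC $\langle l,c\rangle$ with $dt$ by the rule: $l':=l$; $l:=\max(l',pt,dt.l)$ where $pt$ is its physical clock; then $c:=\max(c,dt.c)+1$ if $l=l'=dt.l$, else $c:=c+1$ if $l=l'$, else $c:=dt.c+1$ if $l=dt.l$, else $c:=0$; it timestamps the new version with the updated HLC value $t$ and $dc\_id=d$, appends it to the Raft log, and after commit replies with $d$, $sv[d]$ and $t$; the client sets $hwm[d,p]:=\max(hwm[d,p],sv[d])$ and $dt_w:=\max(dt_w,t)$. Definitions. $CommittedWrites(s,k,t)$ is the ordered sequence of all writes of key $k$ committed at server $s$ by time $t$; $ClientWrites(c,k,t)$ is the ordered sequence of all writes of $k$ done by client $c$ by time $t$; $ClientReads(c,k,t)$ is the set of writes whose value of $k$ has been read by client $c$ by time $t$. *)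

(* Defs.v *)
From HB Require Import structures.
From mathcomp Require Import all_boot all_order.
From Stdlib Require List.
Set Implicit Arguments. Unset Strict Implicit. Unset Printing Implicit Defensive.

Definition hlc := (nat * nat)%type.
Definition hlc0 : hlc := (0, 0).
Definition hlc_lt (a b : hlc) : bool :=
  (a.1 < b.1) || ((a.1 == b.1) && (a.2 < b.2)).
Definition hlc_le (a b : hlc) : bool := hlc_lt a b || (a == b).
Definition hlc_max (a b : hlc) : hlc := if hlc_lt a b then b else a.

(* HLC update of a leader with current value cur, physical clock pt and
   dependency timestamp dt (rule from the paper). *)
Definition hlc_update (cur : hlc) (pt : nat) (dt : hlc) : hlc :=
  let l' := cur.1 in
  let l := maxn (maxn l' pt) dt.1 in
  let c := if (l == l') && (l' == dt.1) then (maxn cur.2 dt.2).+1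
           else if l == l' then cur.2.+1
           else if l == dt.1 then dt.2.+1
           else 0 in
  (l, c).

Record Params := {
  nD : nat;
  nP : nat;
  Member : eqType;                    (* members of a Raft group *)
  leader : 'I_nD -> 'I_nP -> Member;
  Key : eqType;
  Val : Type;
  part : Key -> 'I_nP;
  Client : eqType;
}.

Section Model.
Context (P : Params).

Notation DC := 'I_(nD P).
Notation PT := 'I_(nP P).

Record version := Version {
  vkey : Key P;
  vval : Val P;
  vdc  : DC;     (* originating datacenter *)
  vidx : nat;    (* index in the Raft log of the originating datacenter *)
  vts  : hlc;
}.

Definition server := (DC * PT * Member P)%type.

Inductive pending :=
| PNone
| PGet (k : Key P) (d : DC) (m : Member P) (hrv hwv : DC -> nat)
| PPut (k : Key P) (x : Val P) (d : DC) (dt : hlc)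
      (* PUT sent to leader L_d, not yet appended *)
| PPutWait (v : version) (pos : nat).
      (* PUT appended as version v at (0-based) position pos, awaiting commit *)

Record cstate := CState {
  hrm : DC -> PT -> nat;
  hwm : DC -> PT -> nat;
  dtr : hlc;
  dtw : hlc;
  pend : pending;
  cwrites : seq version;  (* completed writes of the client, in order *)
  creads  : seq version;
}.

Record gstate := GState {
  glog : DC -> PT -> seq version;
  ccnt : DC -> PT -> Member P -> nat;
  svec : DC -> PT -> Member P -> DC -> nat;
  clk  : DC -> PT -> Member P -> hlc;
  chan : DC -> DC -> PT -> seq version;         (* FIFO channel d -> d' for p *)
  cls  : Client P -> cstate;
}.

Definition upd {A : eqType} {B : Type} (f : A -> B) (a : A) (b : B) : A -> B :=
  fun x => if x == a then b else f x.

Definition set_client (s : gstate) (c : Client P) (cs : cstate) : gstate :=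
  GState (glog s) (ccnt s) (svec s) (clk s) (chan s) (upd (cls s) c cs).

Definition set_pend (cs : cstate) (q : pending) : cstate :=
  CState (hrm cs) (hwm cs) (dtr cs) (dtw cs) q (cwrites cs) (creads cs).

Definition zero_vec : DC -> nat := fun _ => 0.

Definition committed (s : gstate) (d : DC) (p : PT) (m : Member P) : seq version :=
  take (ccnt s d p m) (glog s d p).

Definition CommittedWrites (s : gstate) (srv : server) (k : Key P) : seq version :=
  [seq v <- committed s srv.1.1 srv.1.2 srv.2 | vkey v == k].

Definition ClientWrites (s : gstate) (c : Client P) (k : Key P) : seq version :=
  [seq v <- cwrites (cls s c) | vkey v == k].

Definition ClientReads (s : gstate) (c : Client P) (k : Key P) : seq version :=
  [seq v <- creads (cls s c) | vkey v == k].

Inductive label :=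
| LIdle
| LIssueGet (c : Client P) (k : Key P) (d : DC) (m : Member P) (hrv hwv : DC -> nat)
| LServeGet (c : Client P)
| LIssuePut (c : Client P) (k : Key P) (x : Val P) (d : DC) (dt : hlc)
| LAcceptPut (c : Client P) (pt : nat)
| LReplyPut (c : Client P)
| LCommit (d : DC) (p : PT) (m : Member P)
| LRecv (d d' : DC) (p : PT).

Definition init (s : gstate) : Prop :=
  (forall d p, glog s d p = [::]) /\
  (forall d p m, ccnt s d p m = 0) /\
  (forall d p m i, svec s d p m i = 0) /\
  (forall d p m, clk s d p m = hlc0) /\
  (forall d d' p, chan s d d' p = [::]) /\
  (forall c, cls s c = CState (fun _ _ => 0) (fun _ _ => 0) hlc0 hlc0 PNone [::] [::]).

Inductive step : gstate -> label -> gstate -> Prop :=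
| StIdle s : step s LIdle s
| StIssueGet s c k d m hrv hwv :
    pend (cls s c) = PNone ->
    hrv = zero_vec \/ hrv = (fun i => hrm (cls s c) i (part k)) ->
    hwv = zero_vec \/ hwv = (fun i => hwm (cls s c) i (part k)) ->
    step s (LIssueGet c k d m hrv hwv)
         (set_client s c (set_pend (cls s c) (PGet k d m hrv hwv)))
| StServeGetNone s c k d m hrv hwv :
    pend (cls s c) = PGet k d m hrv hwv ->
    (forall i, hrv i <= svec s d (part k) m i /\ hwv i <= svec s d (part k) m i) ->
    CommittedWrites s (d, part k, m) k = [::] ->
    step s (LServeGet c) (set_client s c (set_pend (cls s c) PNone))
| StServeGet s c k d m hrv hwv v :
    pend (cls s c) = PGet k d m hrv hwv ->
    (forall i, hrv i <= svec s d (part k) m i /\ hwv i <= svec s d (part k) m i) ->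
    List.In v (CommittedWrites s (d, part k, m) k) ->
    (forall w, List.In w (CommittedWrites s (d, part k, m) k) -> hlc_le (vts w) (vts v)) ->
    let cs := cls s c in
    step s (LServeGet c)
      (set_client s c
        (CState (upd (hrm cs) (vdc v)
                   (upd (hrm cs (vdc v)) (part k)
                      (maxn (hrm cs (vdc v) (part k)) (svec s d (part k) m (vdc v)))))
                (hwm cs) (hlc_max (dtr cs) (vts v)) (dtw cs) PNone
                (cwrites cs) (v :: creads cs)))
| StIssuePut s c k x d dt :
    pend (cls s c) = PNone ->
    [\/ dt = hlc0, dt = dtr (cls s c), dt = dtw (cls s c)
      | dt = hlc_max (dtr (cls s c)) (dtw (cls s c))] ->
    step s (LIssuePut c k x d dt)
         (set_client s c (set_pend (cls s c) (PPut k x d dt)))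
| StAcceptPut s c k x d dt pt :
    pend (cls s c) = PPut k x d dt ->
    let p := part k in
    let L := leader d p in
    let t := hlc_update (clk s d p L) pt dt in
    let pos := size (glog s d p) in
    let v := Version k x d pos.+1 t in
    step s (LAcceptPut c pt)
      (GState (upd (glog s) d (upd (glog s d) p (rcons (glog s d p) v)))
              (ccnt s) (svec s)
              (upd (clk s) d (upd (clk s d) p (upd (clk s d p) L t)))
              (chan s)
              (upd (cls s) c (set_pend (cls s c) (PPutWait v pos))))
| StReplyPut s c v pos :
    pend (cls s c) = PPutWait v pos ->
    let d := vdc v in
    let p := part (vkey v) in
    let L := leader d p in
    pos < ccnt s d p L ->
    let cs := cls s c in
    step s (LReplyPut c)
      (set_client s c
        (CState (hrm cs)
                (upd (hwm cs) d (upd (hwm cs d) p (maxn (hwm cs d p) (svec s d p L d))))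
                (dtr cs) (hlc_max (dtw cs) (vts v)) PNone
                (rcons (cwrites cs) v) (creads cs)))
| StCommit s d p m :
    let n := ccnt s d p m in
    n < size (glog s d p) ->
    forall e, nth e (glog s d p) n = e ->
    let fwd := (m == leader d p) && (vdc e == d) in
    step s (LCommit d p m)
      (GState (glog s)
              (upd (ccnt s) d (upd (ccnt s d) p (upd (ccnt s d p) m n.+1)))
              (upd (svec s) d (upd (svec s d) p (upd (svec s d p) m
                   (upd (svec s d p m) (vdc e) (vidx e)))))
              (clk s)
              (fun a b q => if fwd && (a == d) && (b != d) && (q == p)
                            then rcons (chan s a b q) e else chan s a b q)
              (cls s))
| StRecv s d d' p e rest :
    chan s d d' p = e :: rest ->
    step s (LRecv d d' p)
      (GState (upd (glog s) d' (upd (glog s d') p (rcons (glog s d' p) e)))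
              (ccnt s) (svec s) (clk s)
              (upd (chan s) d (upd (chan s d) d' (upd (chan s d d') p rest)))
              (cls s)).

Definition execution (tr : nat -> gstate) (lab : nat -> label) : Prop :=
  init (tr 0) /\ forall t, step (tr t) (lab t) (tr t.+1).

End Model.

(* Main.v *)
Require Import Defs.
From mathcomp Require Import all_boot all_order.
From Stdlib Require List.
Set Implicit Arguments. Unset Strict Implicit. Unset Printing Implicit Defensive.

Section L.
Variable T : Type.
Lemma In_filter (a : pred T) (x : T) s : List.In x (filter a s) <-> List.In x s /\ a x.
Proof.
elim: s => [|y s IH] /=; first by split => // -[].
case ay: (a y) => /=.
  split; first by case=> [<-|/IH[]]; auto.
  by case=> [[<-|h] ax]; [left|right; apply/IH].
split; first by move/IH=> [] ; auto.
by case=> [[<-|h] ax]; [rewrite ax in ay|apply/IH].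
Qed.
Lemma In_cat (x : T) (s1 s2 : seq T) : List.In x (s1 ++ s2) <-> List.In x s1 \/ List.In x s2.
Proof.
elim: s1 => [|y s IH] /=; first by split; [right|case].
rewrite IH; tauto.
Qed.
Lemma In_rcons (x : T) s y : List.In x (rcons s y) <-> List.In x s \/ x = y.
Proof. rewrite -cats1 In_cat /=; split; intuition. Qed.
Lemma In_nth (x0 : T) s n : n < size s -> List.In (nth x0 s n) s.
Proof. elim: s n => [|y s IH] [|n] //= h; [left|right; apply: IH]; done. Qed.
Lemma In_take (x : T) n s : List.In x (take n s) -> List.In x s.
Proof. elim: s n => [|y s IH] [|n] //= [->|h]; [left|right; apply: IH h]; done. Qed.
End L.

Lemma In_mem (T : eqType) (x : T) s : List.In x s -> x \in s.
Proof. elim: s => [|y s IH] //= [->|h]; rewrite inE ?eqxx //; apply/orP; right; exact: IH. Qed.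

Lemma sorted_last_max (l : seq nat) a x : path ltn a l -> x \in a :: l -> x <= last a l.
Proof.
elim: l a x => [|b l IH] a x /=; first by rewrite inE => _ /eqP ->.
case/andP=> ab pb; rewrite inE => /orP[/eqP ->|xl].
  apply: leq_trans (ltnW ab) _; apply: IH pb _; exact: mem_head.
exact: IH pb xl.
Qed.
Set Implicit Arguments. Unset Strict Implicit. Unset Printing Implicit Defensive.

Section M.
Context (P : Params).
Notation DC := 'I_(nD P).
Notation PT := 'I_(nP P).

Definition fI (i : DC) (e : version P) : bool := vdc e == i.

Lemma sorted_prefix_In (S F R : seq (version P)) x :
  sorted ltn (map (@vidx P) S) -> S = F ++ R -> List.In x F ->
  vidx x <= last 0 (map (@vidx P) F).
Proof.
move=> so eS xF; case: F eS xF => [|f F] // eS xF.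
move: so; rewrite eS map_cat sorted_pairwise; last exact: ltn_trans.
rewrite pairwise_cat => /and3P[_ pF _].
have sF : sorted ltn (map (@vidx P) (f :: F)).
  by rewrite sorted_pairwise //; exact: ltn_trans.
rewrite /= in sF *.
apply: sorted_last_max sF _.
have := In_mem (List.in_map (@vidx P) _ _ xF); done.
Qed.

Lemma sorted_prefix_In2 (S F R : seq (version P)) x :
  sorted ltn (map (@vidx P) S) -> S = F ++ R -> List.In x S ->
  0 < vidx x -> vidx x <= last 0 (map (@vidx P) F) -> List.In x F.
Proof.
move=> so eS xS x0 xl; move: xS; rewrite eS In_cat => -[//|xR].
move: so; rewrite eS map_cat sorted_pairwise; last exact: ltn_trans.
rewrite pairwise_cat => /and3P[/allrelP ar _ _].
case: F {eS} ar xl => [|f F] ar xl; first by move: xl; rewrite /= leqn0 => /eqP e; rewrite e in x0.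
have := ar (last 0 (map (@vidx P) (f :: F))) (vidx x).
rewrite /= mem_last => /(_ isT (In_mem (List.in_map (@vidx P) _ _ xR))).
by rewrite ltnNge /= xl.
Qed.

Lemma upd2E (A : Type) (f : DC -> PT -> A) d p x d0 p0 :
  upd f d (upd (f d) p x) d0 p0 = if (d0 == d) && (p0 == p) then x else f d0 p0.
Proof. by rewrite /upd; case: eqP => [->|]; case: eqP. Qed.

Record Inv (s : gstate P) : Prop := {
 I_cc : forall d p m, ccnt s d p m <= size (glog s d p);
 I_chd : forall d p, chan s d d p = [::];
 I_chan : forall i d' p, i != d' ->
    filter (fI i) (glog s d' p) ++ chan s i d' p = filter (fI i) (committed s i p (leader i p));
 I_sort : forall i p, sorted ltn (map (@vidx P) (filter (fI i) (glog s i p)));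
 I_bnd : forall i p e, List.In e (glog s i p) -> vdc e = i -> vidx e <= size (glog s i p);
 I_sv : forall d p m i, svec s d p m i = last 0 (map (@vidx P) (filter (fI i) (committed s d p m)));
 I_cw : forall c w, List.In w (cwrites (cls s c)) -> 0 < vidx w /\
    vidx w <= hwm (cls s c) (vdc w) (part (vkey w)) /\ List.In w (glog s (vdc w) (part (vkey w)));
 I_pw : forall c v pos, pend (cls s c) = PPutWait v pos -> 0 < vidx v /\
    pos < size (glog s (vdc v) (part (vkey v))) /\ nth v (glog s (vdc v) (part (vkey v))) pos = v
}.

Lemma inv_init s : init s -> Inv s.
Proof.
rewrite /init; case=> g [cc [sv [_ [ch cl]]]]; split.
- by move=> *; rewrite cc.
- by move=> *; rewrite ch.
- by move=> *; rewrite ch /committed !g.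
- by move=> *; rewrite g.
- by move=> i p e; rewrite g.
- by move=> *; rewrite sv /committed g.
- by move=> c w; rewrite cl.
- by move=> c v pos; rewrite cl.
Qed.

Lemma inv_prefix s i d' q m : Inv s ->
  exists R, filter (fI i) (glog s i q) = filter (fI i) (committed s d' q m) ++ R.
Proof.
move=> I.
have pre : forall n l, exists R, filter (fI i) l = filter (fI i) (take n l) ++ R.
  by move=> n l; exists (filter (fI i) (drop n l)); rewrite -filter_cat cat_take_drop.
have [R1 e1] := pre (ccnt s d' q m) (glog s d' q).
case: (eqVneq i d') => [e|ne]; first by subst; exists R1; rewrite e1.
have [R2 e2] := pre (ccnt s i q (leader i q)) (glog s i q).
exists (R1 ++ chan s i d' q ++ R2).
rewrite e2 -/(committed s i q (leader i q)) -(I_chan I q ne) e1 -!catA.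
by congr (_ ++ _); rewrite /committed.
Qed.

Lemma inv_set_client s c cs : Inv s ->
  (forall w, List.In w (cwrites cs) -> 0 < vidx w /\
    vidx w <= hwm cs (vdc w) (part (vkey w)) /\ List.In w (glog s (vdc w) (part (vkey w)))) ->
  (forall v pos, pend cs = PPutWait v pos -> 0 < vidx v /\
    pos < size (glog s (vdc v) (part (vkey v))) /\ nth v (glog s (vdc v) (part (vkey v))) pos = v) ->
  Inv (set_client s c cs).
Proof.
case=> h1 h2 h3 h4 h5 h6 h7 h8 H1 H2; split => //= c0; rewrite /upd; case: eqP => _; by [apply: H1|apply: H2|apply: h7|apply: h8].
Qed.
End M.
Set Implicit Arguments. Unset Strict Implicit. Unset Printing Implicit Defensive.

Section M.
Context (P : Params).
Notation DC := 'I_(nD P).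
Notation PT := 'I_(nP P).

Lemma upd1E (A : eqType) (B : Type) (f : A -> B) a b x : upd f a b x = if x == a then b else f x.
Proof. by []. Qed.

Lemma upd3E (A : Type) (f : DC -> PT -> Member P -> A) d p m x d0 p0 m0 :
  upd f d (upd (f d) p (upd (f d p) m x)) d0 p0 m0 =
  if (d0 == d) && (p0 == p) && (m0 == m) then x else f d0 p0 m0.
Proof. by rewrite /upd; case: eqP => [->|]; case: eqP => [->|]; case: eqP. Qed.

Lemma upd4E (A : Type) (f : DC -> PT -> Member P -> DC -> A) d p m x d0 p0 m0 :
  upd f d (upd (f d) p (upd (f d p) m x)) d0 p0 m0 =
  if (d0 == d) && (p0 == p) && (m0 == m) then x else f d0 p0 m0.
Proof. by rewrite /upd; case: eqP => [->|]; case: eqP => [->|]; case: eqP. Qed.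

Lemma inv_commit (s : gstate P) d p m e : Inv s ->
  ccnt s d p m < size (glog s d p) -> nth e (glog s d p) (ccnt s d p m) = e ->
  Inv (GState (glog s)
              (upd (ccnt s) d (upd (ccnt s d) p (upd (ccnt s d p) m (ccnt s d p m).+1)))
              (upd (svec s) d (upd (svec s d) p (upd (svec s d p) m
                   (upd (svec s d p m) (vdc e) (vidx e)))))
              (clk s)
              (fun a b q => if ((m == leader d p) && (vdc e == d)) && (a == d) && (b != d) && (q == p)
                            then rcons (chan s a b q) e else chan s a b q)
              (cls s)).
Proof.
move=> I lt en.
have tk : take (ccnt s d p m).+1 (glog s d p) = rcons (committed s d p m) e.
  by rewrite (take_nth e lt) en.
split => /=.
- move=> d0 p0 m0; rewrite upd3E; case: ifP => [/andP[/andP[/eqP -> /eqP ->] _]|_] //.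
  exact: I_cc I _ _ _.
- move=> d0 q; case: (eqVneq d0 d) => [->|ne]; first by rewrite ?eqxx /= ?andbF /= (I_chd I).
  by rewrite /= !andbF /= (I_chd I).
- move=> i d'' q ne; rewrite /committed /= upd3E.
  case: (eqVneq i d) => [ei|nid]; last first.
    by rewrite /= ?andbF /= (I_chan I _ ne).
  subst i; rewrite /= ?ne.
  case: (eqVneq q p) => [eq|nqp]; last first.
    by rewrite /= ?andbF /= (I_chan I _ ne).
  subst q; rewrite /= ?andbT.
  case: (eqVneq (leader d p) m) => [em|nm]; last first.
    by rewrite /= (I_chan I _ ne).
  rewrite (eq_sym d'' d) ne /= andbT tk filter_rcons -em -(I_chan I _ ne) /fI.
  by case: (vdc e == d) => //=; rewrite rcons_cat.
- exact: I_sort I.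
- exact: I_bnd I.
- move=> d0 p0 m0 i; rewrite upd4E /committed /= upd3E.
  case: ifP => [/andP[/andP[/eqP ? /eqP ?] /eqP ?]|_]; last exact: I_sv I _ _ _ _.
  subst.
  rewrite tk filter_rcons /fI upd1E.
  case: (eqVneq (vdc e) i) => [<-|ne]; first by rewrite ?eqxx map_rcons last_rcons.
  by rewrite ?(I_sv I).
- exact: I_cw I.
- exact: I_pw I.
Qed.

Lemma mem_map_In (T : Type) (f : T -> nat) y l : y \in map f l -> exists x, List.In x l /\ f x = y.
Proof.
elim: l => [|a l IH] //=; rewrite inE => /orP[/eqP ->|/IH [x [h e]]]; first by exists a; auto.
by exists x; auto.
Qed.

Lemma sorted_rcons_lt (l : seq nat) z : sorted ltn l -> (forall y, y \in l -> y < z) -> sorted ltn (rcons l z).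
Proof.
move=> so h; rewrite sorted_pairwise; last exact: ltn_trans.
rewrite -cats1 pairwise_cat; apply/and3P; split => //.
- by apply/allrelP => a b ha; rewrite inE => /eqP ->; exact: h.
- by rewrite -sorted_pairwise //; exact: ltn_trans.
Qed.

Lemma updCE (A : Type) (f : DC -> DC -> PT -> A) d d' p x a b q :
  upd f d (upd (f d) d' (upd (f d d') p x)) a b q =
  if (a == d) && (b == d') && (q == p) then x else f a b q.
Proof. by rewrite /upd; case: eqP => [->|]; case: eqP => [->|]; case: eqP. Qed.

Section Ext.
Variables (s : gstate P) (d : DC) (p : PT) (x : version P).
Let G := upd (glog s) d (upd (glog s d) p (rcons (glog s d p) x)).
Lemma In_G a b w : List.In w (glog s a b) -> List.In w (G a b).
Proof. rewrite /G upd2E; case: ifP => [/andP[/eqP -> /eqP ->] h|_ h]; [apply/In_rcons; left; exact: h | exact: h]. Qed.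
Lemma size_G a b : size (glog s a b) <= size (G a b).
Proof. rewrite /G upd2E; case: ifP => [/andP[/eqP -> /eqP ->]|_] //; rewrite size_rcons; exact: leqnSn. Qed.
Lemma nth_G a b v pos : pos < size (glog s a b) -> nth v (G a b) pos = nth v (glog s a b) pos.
Proof. rewrite /G upd2E; case: ifP => [/andP[/eqP -> /eqP ->]|_] h //; by rewrite nth_rcons h. Qed.
Lemma take_G a b n : n <= size (glog s a b) -> take n (G a b) = take n (glog s a b).
Proof. rewrite /G upd2E; case: ifP => [/andP[/eqP -> /eqP ->]|_] h //; by rewrite -cats1 takel_cat. Qed.
End Ext.

Lemma inv_recv (s : gstate P) d d' p e rest : Inv s -> chan s d d' p = e :: rest ->
  Inv (GState (upd (glog s) d' (upd (glog s d') p (rcons (glog s d' p) e)))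
              (ccnt s) (svec s) (clk s)
              (upd (chan s) d (upd (chan s d) d' (upd (chan s d d') p rest)))
              (cls s)).
Proof.
move=> I ech.
have ndd : d != d'.
  by apply/eqP => edd; subst; rewrite (I_chd I) in ech.
have ve : vdc e = d.
  have := I_chan I p ndd; rewrite ech => h.
  have : List.In e (filter (fI d) (committed s d p (leader d p))).
    by rewrite -h In_cat; right; left.
  by case/In_filter => _ /eqP.
have comm : forall a b m, committed (GState (upd (glog s) d' (upd (glog s d') p (rcons (glog s d' p) e)))
              (ccnt s) (svec s) (clk s)
              (upd (chan s) d (upd (chan s d) d' (upd (chan s d d') p rest)))
              (cls s)) a b m = committed s a b m.
  by move=> a b m; rewrite /committed /= take_G // (I_cc I).
split.
- by move=> a b m /=; apply: leq_trans (I_cc I a b m) (size_G _ _ _ _ _ _).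
- move=> a q /=; rewrite updCE; case: (eqVneq a d) => [ea|]; last by rewrite /= (I_chd I).
  by subst a; rewrite (negbTE ndd) /= (I_chd I).
- move=> i d'' q ne; rewrite comm /= updCE upd2E -(I_chan I _ ne).
  case: (eqVneq d'' d') => [?|n1]; last by rewrite /= !andbF.
  subst d''; case: (eqVneq q p) => [?|n2]; last by rewrite /= !andbF.
  subst q; rewrite /= !andbT filter_rcons /fI ve.
  case: (eqVneq i d) => [?|n3]; last by [].
  by subst i; rewrite cat_rcons ech.
- move=> i q /=; rewrite upd2E; case: ifP => [/andP[/eqP ? /eqP ?]|_]; last exact: (I_sort I i q).
  by subst i q; rewrite filter_rcons /fI ve (negbTE ndd); exact: (I_sort I d' p).
- move=> i q y /=; rewrite upd2E; case: ifP => [/andP[/eqP ? /eqP ?]|_]; last exact: (I_bnd I (p:=q) (e:=y)).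
  subst i q.
  case/In_rcons => [h hv|-> hv]; first by rewrite size_rcons; apply: leqW; exact: I_bnd I _ _ _ h hv.
  by move: hv; rewrite ve => edd; rewrite edd eqxx in ndd.
- by move=> a b m i; rewrite comm; exact: (I_sv I a b m i).
- move=> c w /= h; have [h1 [h2 h3]] := I_cw I h; split => //; split => //; exact: In_G.
- move=> c v pos /= h; have [h1 [h2 h3]] := I_pw I h; split => //; split.
    by apply: leq_trans h2 (size_G _ _ _ _ _ _).
  by rewrite nth_G.
Qed.

Lemma inv_accept (s : gstate P) c k x d dt (t : hlc) clk' : Inv s ->
  pend (cls s c) = PPut k x d dt ->
  Inv (GState (upd (glog s) d (upd (glog s d) (part k)
                 (rcons (glog s d (part k)) (Version k x d (size (glog s d (part k))).+1 t))))
              (ccnt s) (svec s) clk' (chan s)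
              (upd (cls s) c (set_pend (cls s c)
                 (PPutWait (Version k x d (size (glog s d (part k))).+1 t) (size (glog s d (part k))))))).
Proof.
move=> I ep.
set p := part k; set v := Version k x d (size (glog s d p)).+1 t.
set s' := GState _ _ _ _ _ _.
have comm : forall a b m, committed s' a b m = committed s a b m.
  by move=> a b m; rewrite /committed /= take_G // (I_cc I).
split.
- by move=> a b m /=; apply: leq_trans (I_cc I a b m) (size_G _ _ _ _ _ _).
- exact: I_chd I.
- move=> i d'' q ne; rewrite comm /= upd2E -(I_chan I _ ne).
  case: ifP => [/andP[/eqP ? /eqP ?]|_] //; subst d'' q.
  by rewrite filter_rcons /fI /= eq_sym (negbTE ne).
- move=> i q /=; rewrite upd2E; case: ifP => [/andP[/eqP ? /eqP ?]|_]; last exact: (I_sort I i q).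
  subst i q; rewrite filter_rcons /fI /= eqxx map_rcons.
  apply: sorted_rcons_lt; first exact: (I_sort I d p).
  move=> y /mem_map_In [z [/In_filter [hz /eqP hd] <-]].
  by rewrite ltnS; exact: (I_bnd I hz hd).
- move=> i q y /=; rewrite upd2E; case: ifP => [/andP[/eqP ? /eqP ?]|_]; last exact: (I_bnd I (p:=q) (e:=y)).
  subst i q.
  case/In_rcons => [h hv|-> _]; last by rewrite size_rcons.
  by rewrite size_rcons; apply: leqW; exact: I_bnd I _ _ _ h hv.
- by move=> a b m i; rewrite comm; exact: (I_sv I a b m i).
- move=> c0 w /=; rewrite upd1E; case: ifP => _ /= h.
    have [h1 [h2 h3]] := I_cw I h; split => //; split => //; exact: In_G.
  have [h1 [h2 h3]] := I_cw I h; split => //; split => //; exact: In_G.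
- move=> c0 v0 pos /=; rewrite upd1E; case: ifP => _ /= h.
    case: h => <- <- /=; split => //; rewrite upd2E !eqxx /= size_rcons; split => //.
    by rewrite nth_rcons ltnn eqxx.
  have [h1 [h2 h3]] := I_pw I h; split => //; split.
    by apply: leq_trans h2 (size_G _ _ _ _ _ _).
  by rewrite nth_G.
Qed.

Lemma inv_reply (s : gstate P) c v pos hr dr dw cr : Inv s ->
  pend (cls s c) = PPutWait v pos ->
  pos < ccnt s (vdc v) (part (vkey v)) (leader (vdc v) (part (vkey v))) ->
  Inv (set_client s c (CState hr
        (upd (hwm (cls s c)) (vdc v) (upd (hwm (cls s c) (vdc v)) (part (vkey v))
           (maxn (hwm (cls s c) (vdc v) (part (vkey v)))
                 (svec s (vdc v) (part (vkey v)) (leader (vdc v) (part (vkey v))) (vdc v)))))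
        dr dw (PNone P) (rcons (cwrites (cls s c)) v) cr)).
Proof.
move=> I ep lt; apply: inv_set_client => //= w.
have mono : forall a b, hwm (cls s c) a b <= upd (hwm (cls s c)) (vdc v) (upd (hwm (cls s c) (vdc v)) (part (vkey v))
           (maxn (hwm (cls s c) (vdc v) (part (vkey v)))
                 (svec s (vdc v) (part (vkey v)) (leader (vdc v) (part (vkey v))) (vdc v)))) a b.
  move=> a b; rewrite upd2E; case: ifP => [/andP[/eqP -> /eqP ->]|_] //; exact: leq_maxl.
case/In_rcons => [h|->].
  have [h1 [h2 h3]] := I_cw I h; split => //; split => //; exact: leq_trans h2 (mono _ _).
have [h1 [h2 h3]] := I_pw I ep; split => //; split => //; last by have := In_nth v h2; rewrite h3.
rewrite upd2E !eqxx /=; apply: leq_trans (leq_maxr _ _).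
rewrite (I_sv I).
have [R eR] := inv_prefix (vdc v) (vdc v) (part (vkey v)) (leader (vdc v) (part (vkey v))) I.
apply: sorted_prefix_In (I_sort I _ _) eR _.
apply/In_filter; split; last by rewrite /fI.
have hs : pos < size (committed s (vdc v) (part (vkey v)) (leader (vdc v) (part (vkey v)))).
  by rewrite /committed size_takel // (I_cc I).
have := In_nth v hs; rewrite /committed nth_take // h3; done.
Qed.

Lemma inv_step (s : gstate P) l s' : Inv s -> step s l s' -> Inv s'.
Proof.
move=> I H; move: H I; case => {s l s'}.
- by move=> s0 I.
- move=> s0 c k d m hrv hwv _ _ _ I; apply: inv_set_client => //= w; exact: (I_cw I).
- move=> s0 c k d m hrv hwv _ _ _ I; apply: inv_set_client => //= w; exact: (I_cw I).
- move=> s0 c k d m hrv hwv v _ _ _ _ cs I; apply: inv_set_client => //= w; exact: (I_cw I).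
- move=> s0 c k x d dt _ _ I; apply: inv_set_client => //= w; exact: (I_cw I).
- move=> s0 c k x d dt pt ep p L t pos v I; exact: (inv_accept _ _ I ep).
- move=> s0 c v pos ep d p L lt cs I; exact: (inv_reply _ _ _ _ I ep lt).
- move=> s0 d p m n lt e en fwd I; exact: (inv_commit I lt en).
- move=> s0 d d' p e rest ech I; exact: (inv_recv I ech).
Qed.

Lemma step_issue (s : gstate P) l s' c k d m hrv hwv : step s l s' ->
  l = LIssueGet c k d m hrv hwv -> cls s' c = set_pend (cls s c) (PGet k d m hrv hwv).
Proof.
move=> H el; subst l; inversion H; subst.
by rewrite /= /upd eqxx.
Qed.

Lemma step_frame (s : gstate P) l s' c k d m hrv hwv : step s l s' ->
  pend (cls s c) = PGet k d m hrv hwv -> l <> LServeGet c -> cls s' c = cls s c.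
Proof.
move=> H; destruct H => ep nl /=; rewrite ?/upd; try (case: eqP => // ?; subst); congruence.
Qed.

Lemma step_serve (s : gstate P) s' c k d m hrv hwv : step s (LServeGet c) s' ->
  pend (cls s c) = PGet k d m hrv hwv -> forall i, hwv i <= svec s d (part k) m i.
Proof.
move=> H; inversion H; subst => ep i.
- rewrite ep in H1; case: H1 => ? ? ? ? ?; subst; by case: (H2 i).
- rewrite ep in H1; case: H1 => ? ? ? ? ?; subst; by case: (H2 i).
Qed.
End M.

Unset Implicit Arguments.

Theorem mainTheorem3 (P : Params) (tr : nat -> gstate P) (lab : nat -> label P) :
  execution tr lab ->
  forall (c : Client P) (k : Key P) (d : 'I_(nD P)) (m : Member P)
         (hrv : 'I_(nD P) -> nat) (t t' : nat),
    (* GET issued by c at time t with hwv = hwm[:,p], p = part k *)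
    lab t = LIssueGet c k d m hrv (fun i => hwm (cls (tr t) c) i (part k)) ->
    (* served (value of k read) by server (d, part k, m) at time t' *)
    t < t' -> lab t' = LServeGet c ->
    (forall u, t < u < t' -> lab u <> LServeGet c) ->
    forall w, List.In w (ClientWrites (tr t) c k) ->
              List.In w (CommittedWrites (tr t') (d, part k, m) k).
Proof.
move=> [Hi Hs] c k d m hrv t t' Lt ltt' Lt' Hno w Hw.
have Iall : forall u, Inv (tr u).
  by elim => [|u IH]; [exact: inv_init | exact: inv_step IH (Hs u)].
set hwv := (fun i => hwm (cls (tr t) c) i (part k)) in Lt.
have Hp : forall u, t < u <= t' ->
    pend (cls (tr u) c) = PGet k d m hrv hwv /\ cwrites (cls (tr u) c) = cwrites (cls (tr t) c).
  elim => [|u IH] // /andP[tu ut'].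
  case: (eqVneq u t) => [eut|nut].
    subst u; by rewrite (step_issue (Hs t) Lt).
  have tu' : t < u by rewrite ltn_neqAle eq_sym nut -ltnS.
  have [h1 h2] := IH (ltac:(by rewrite tu' ltnW)).
  rewrite (step_frame (Hs u) h1 (Hno u (ltac:(by rewrite tu'))))//.
have [hp hc] := Hp t' (ltac:(by rewrite ltt' leqnn)).
have hs' := Hs t'; rewrite Lt' in hs'.
have hsv := step_serve hs' hp.
move: Hw; rewrite /ClientWrites => /In_filter [Hw /eqP ek].
have [w0 [hw1 _]] := I_cw (Iall t) Hw.
rewrite -hc in Hw; have [_ [_ hw3]] := I_cw (Iall t') Hw.
rewrite ek in hw1 hw3.
have le1 : vidx w <= svec (tr t') d (part k) m (vdc w) by apply: leq_trans hw1 (hsv _).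
rewrite (I_sv (Iall t')) in le1.
have [R eR] := inv_prefix (vdc w) d (part k) m (Iall t').
have := sorted_prefix_In2 (I_sort (Iall t') _ _) eR _ w0 le1.
rewrite /CommittedWrites /= => h; apply/In_filter; split; last by rewrite ek.
have [h' _] : List.In w (committed (tr t') d (part k) m) /\ fI (vdc w) w.
  apply/In_filter; apply: h; apply/In_filter; split => //; by rewrite /fI.
exact: h'.
Qed.
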